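(* Let $(N,\langle\cdot,\cdot\rangle,\varphi)$ be a modified $H$-type group (see context), with $m=\dim\mathfrak v$. For all $e,e'\in\mathfrak v$ and $z,z'\in\mathfrak z$ the Ricci tensor satisfies $$\mathrm{Ric}(e,z)=0,\qquad \mathrm{Ric}(e,e')=-\tfrac{\xi}{2}\langle e,e'\rangle,\qquad \mathrm{Ric}(z,z')=\tfrac m4\langle z,z'\rangle_\varphi .$$
   Context: Let $N$ be a 2-step nilpotent real Lie group with Lie algebra $\mathfrak n$, Lie bracket $[\cdot,\cdot]$ and center $\mathfrak z$, endowed with a left-invariant pseudo-Riemannian metric $\langle\cdot,\cdot\rangle$ (identified with an inner product on $\mathfrak n$) for which $\mathfrak z$ is nondegenerate. Put $\mathfrak v=\mathfrak z^\perp$. For $z\in\mathfrak z$ define $j(z)\in\mathrm{End}(\mathfrak v)$ by $\langle [x,y],z\rangle=\langle y,j(z)x\rangle$ for all $x,y\in\mathfrak v$. Given a quadratic form $\varphi$ on $\mathfrak z$, $(N,\langle\cdot,\cdot\rangle,\varphi)$ is a modified $H$-type group if $j(z)^2=-\varphi(z)\,\mathrm{Id}_{\mathfrak v}$ for all $z\in\mathfrak z$ (equivalently $\langle j(z)x,j(z)y\rangle=\varphi(z)\langle x,y\rangle$). $\langle\cdot,\cdot\rangle_\varphi$ denotes the symmetric bilinear form on $\mathfrak z$ obtained by polarizing $\varphi$ (so $\langle z,z\rangle_\varphi=\varphi(z)$). Let $\{z_1,\dots,z_p\}$ be a pseudo-orthonormal basis of $\mathfrak z$ and set $\xi=\sum_{k=1}^p\langle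 z_k,z_k\rangle\,\varphi(z_k)$ (independent of the basis). $\mathrm{Ric}$ is the Ricci tensor of the Levi-Civita connection. *)

(* Defs.v *)
(* The Lie algebra n of N is modelled as 'rV[R]_n (R a realType,
   i.e. the real numbers), and all geometric objects (Levi-Civita connection,
   curvature, Ricci tensor) of the left-invariant metric are the standard
   algebraic ones on left-invariant vector fields (Koszul formula). *)
From mathcomp Require Import all_boot all_order all_algebra.
From mathcomp Require Import reals.
Set Implicit Arguments. Unset Strict Implicit. Unset Printing Implicit Defensive.
Import Order.TTheory GRing.Theory Num.Theory.
Local Open Scope ring_scope.

Definition ipform (R : realType) (n : nat) (G : 'M[R]_n) (x y : 'rV[R]_n) : R :=
  (x *m G *m y^T) 0 0.

Definition is_lie_bracket (R : realType) (n : nat)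
    (br : 'rV[R]_n -> 'rV[R]_n -> 'rV[R]_n) : Prop :=
  (forall (a : R) x y w, br (a *: x + y) w = a *: br x w + br y w) /\
  (forall x y, br x y = - br y x) /\
  (forall x y w, br x (br y w) + br y (br w x) + br w (br x y) = 0).

Definition two_step (R : realType) (n : nat)
    (br : 'rV[R]_n -> 'rV[R]_n -> 'rV[R]_n) : Prop :=
  (forall x y w, br (br x y) w = 0) /\ (exists x y, br x y != 0).

Definition inner_product (R : realType) (n : nat) (G : 'M[R]_n) : Prop :=
  G^T = G /\ G \in unitmx.

Definition center (R : realType) (n : nat)
    (br : 'rV[R]_n -> 'rV[R]_n -> 'rV[R]_n) (z : 'rV[R]_n) : Prop :=
  forall x, br z x = 0.

Definition vpart (R : realType) (n : nat)
    (br : 'rV[R]_n -> 'rV[R]_n -> 'rV[R]_n) (G : 'M[R]_n) (x : 'rV[R]_n) : Prop :=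
  forall z, center br z -> ipform G x z = 0.

Definition nondeg_on (R : realType) (n : nat) (S : 'rV[R]_n -> Prop) (G : 'M[R]_n) : Prop :=
  forall z, S z -> (forall z', S z' -> ipform G z z' = 0) -> z = 0.

Definition is_basis_of (R : realType) (n k : nat) (S : 'rV[R]_n -> Prop)
    (b : 'I_k -> 'rV[R]_n) : Prop :=
  (forall i, S (b i)) /\
  (forall c : 'I_k -> R, \sum_(i < k) c i *: b i = 0 -> forall i, c i = 0) /\
  (forall x, S x -> exists c : 'I_k -> R, x = \sum_(i < k) c i *: b i).

Definition pseudo_orthonormal (R : realType) (n k : nat) (G : 'M[R]_n)
    (b : 'I_k -> 'rV[R]_n) : Prop :=
  (forall i j, i != j -> ipform G (b i) (b j) = 0) /\
  (forall i, ipform G (b i) (b i) = 1 \/ ipform G (b i) (b i) = -1).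

Definition quadratic_form_on (R : realType) (n : nat) (S : 'rV[R]_n -> Prop)
    (phi : 'rV[R]_n -> R) : Prop :=
  exists Q : 'M[R]_n, forall z, S z -> phi z = ipform Q z z.

Definition polar (R : realType) (n : nat) (phi : 'rV[R]_n -> R) (z z' : 'rV[R]_n) : R :=
  (phi (z + z') - phi z - phi z') / 2.

Definition is_j_map (R : realType) (n : nat)
    (br : 'rV[R]_n -> 'rV[R]_n -> 'rV[R]_n) (G : 'M[R]_n)
    (j : 'rV[R]_n -> 'rV[R]_n -> 'rV[R]_n) : Prop :=
  forall z, center br z -> forall x, vpart br G x ->
    vpart br G (j z x) /\
    (forall y, vpart br G y -> ipform G (br x y) z = ipform G y (j z x)).

Definition modified_H_type (R : realType) (n : nat)
    (br : 'rV[R]_n -> 'rV[R]_n -> 'rV[R]_n) (G : 'M[R]_n)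
    (j : 'rV[R]_n -> 'rV[R]_n -> 'rV[R]_n) (phi : 'rV[R]_n -> R) : Prop :=
  forall z, center br z -> forall x, vpart br G x -> j z (j z x) = - (phi z) *: x.

Definition ebase {R : realType} {n : nat} (i : 'I_n) : 'rV[R]_n := delta_mx 0 i.

(* Levi-Civita connection on left-invariant fields, via the Koszul formula
   2<nabla_x y, w> = <[x,y],w> - <[y,w],x> + <[w,x],y> *)
Definition levi_civita (R : realType) (n : nat)
    (br : 'rV[R]_n -> 'rV[R]_n -> 'rV[R]_n) (G : 'M[R]_n) (x y : 'rV[R]_n) : 'rV[R]_n :=
  (\row_(i < n) ((ipform G (br x y) (ebase i) - ipform G (br y (ebase i)) x
                 + ipform G (br (ebase i) x) y) / 2)) *m invmx G.

Definition curv (R : realType) (n : nat)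
    (br : 'rV[R]_n -> 'rV[R]_n -> 'rV[R]_n) (G : 'M[R]_n) (x y w : 'rV[R]_n) : 'rV[R]_n :=
  levi_civita br G x (levi_civita br G y w) - levi_civita br G y (levi_civita br G x w)
  - levi_civita br G (br x y) w.

Definition ricci (R : realType) (n : nat)
    (br : 'rV[R]_n -> 'rV[R]_n -> 'rV[R]_n) (G : 'M[R]_n) (x y : 'rV[R]_n) : R :=
  \sum_(i < n) (curv br G (ebase i) x y) 0 i.

(* Main.v *)
Require Import Defs.
From mathcomp Require Import all_boot all_order all_algebra.
From mathcomp Require Import reals.
From mathcomp Require Import ring lra.
Import Order.TTheory GRing.Theory Num.Theory.
Local Open Scope ring_scope.
Set Implicit Arguments. Unset Strict Implicit. Unset Printing Implicit Defensive.

Section Main.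
Variables (R : realType) (n : nat).
Variable br : 'rV[R]_n -> 'rV[R]_n -> 'rV[R]_n.
Variable G : 'M[R]_n.
Variable j : 'rV[R]_n -> 'rV[R]_n -> 'rV[R]_n.
Variable phi : 'rV[R]_n -> R.
Variable p : nat.
Variable zb : 'I_p -> 'rV[R]_n.
Hypothesis brL : forall (a : R) x y w, br (a *: x + y) w = a *: br x w + br y w.
Hypothesis brA : forall x y, br x y = - br y x.
Hypothesis br2 : forall x y w, br (br x y) w = 0.
Hypothesis GT : G^T = G.
Hypothesis Gu : G \in unitmx.
Hypothesis nd : nondeg_on (center br) G.
Hypothesis zcen : forall k, center br (zb k).
Hypothesis zspan : forall x, center br x -> exists c : 'I_p -> R, x = \sum_(i < p) c i *: zb i.
Hypothesis zorth : forall k l, k != l -> ipform G (zb k) (zb l) = 0.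
Hypothesis znorm : forall k, ipform G (zb k) (zb k) = 1 \/ ipform G (zb k) (zb k) = -1.
Hypothesis jm : is_j_map br G j.
Hypothesis hm : modified_H_type br G j phi.

Local Notation ip := (ipform G).
Local Notation cen := (center br).
Local Notation vp := (vpart br G).

Lemma ipDl x y w : ip (x + y) w = ip x w + ip y w.
Proof. by rewrite /ipform !mulmxDl mxE. Qed.
Lemma ipZl a x w : ip (a *: x) w = a * ip x w.
Proof. by rewrite /ipform -!scalemxAl mxE. Qed.
Lemma ipC x y : ip x y = ip y x.
Proof.
rewrite /ipform -[in LHS](trmxK (x *m G *m y^T)) [in LHS]mxE.
by rewrite !trmx_mul trmxK GT mulmxA.
Qed.
Lemma ipDr x y w : ip w (x + y) = ip w x + ip w y.
Proof. by rewrite ipC ipDl ipC (ipC y). Qed.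
Lemma ipZr a x w : ip w (a *: x) = a * ip w x.
Proof. by rewrite ipC ipZl ipC. Qed.
Lemma ip0l w : ip 0 w = 0.
Proof. by rewrite -(scale0r 0) ipZl mul0r. Qed.
Lemma ip0r w : ip w 0 = 0.
Proof. by rewrite ipC ip0l. Qed.
Lemma ipNl x w : ip (- x) w = - ip x w.
Proof. by rewrite -scaleN1r ipZl mulN1r. Qed.
Lemma ipNr x w : ip w (- x) = - ip w x.
Proof. by rewrite ipC ipNl ipC. Qed.
Lemma ipBl x y w : ip (x - y) w = ip x w - ip y w.
Proof. by rewrite ipDl ipNl. Qed.
Lemma ipBr x y w : ip w (x - y) = ip w x - ip w y.
Proof. by rewrite ipDr ipNr. Qed.
Lemma ip_suml I (r : seq I) (P : pred I) (F : I -> 'rV[R]_n) w :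
  ip (\sum_(i <- r | P i) F i) w = \sum_(i <- r | P i) ip (F i) w.
Proof.
elim/big_rec2: _; first by rewrite ip0l.
by move=> i y1 y2 _ <-; rewrite ipDl.
Qed.
Lemma ip_sumr I (r : seq I) (P : pred I) (F : I -> 'rV[R]_n) w :
  ip w (\sum_(i <- r | P i) F i) = \sum_(i <- r | P i) ip w (F i).
Proof. by rewrite ipC ip_suml; apply: eq_bigr => i _; rewrite ipC. Qed.

Lemma ip_ebase u i : ip u (ebase i) = (u *m G) 0 i.
Proof.
rewrite /ipform /ebase mxE (bigD1 i) //= big1 ?addr0.
  by rewrite !mxE !eqxx mulr1.
by move=> k /negbTE ki; rewrite !mxE ki andbF mulr0.
Qed.

Lemma ip_nondeg u : (forall w, ip u w = 0) -> u = 0.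
Proof.
move=> H; have uG0 : u *m G = 0.
  by apply/rowP => i; rewrite -ip_ebase H mxE.
by rewrite -(mulmxK Gu u) uG0 mul0mx.
Qed.

Lemma br0l w : br 0 w = 0.
Proof.
by move: (brL (-1) 0 0 w); rewrite scaler0 addr0 scaleN1r addNr.
Qed.
Lemma brDl x y w : br (x + y) w = br x w + br y w.
Proof. by move: (brL 1 x y w); rewrite !scale1r. Qed.
Lemma brZl a x w : br (a *: x) w = a *: br x w.
Proof. by move: (brL a x 0 w); rewrite !addr0 br0l addr0. Qed.
Lemma brNl x w : br (- x) w = - br x w.
Proof. by rewrite -scaleN1r brZl scaleN1r. Qed.
Lemma brDr x y w : br w (x + y) = br w x + br w y.
Proof. by rewrite brA brDl opprD -!brA. Qed.
Lemma brZr a x w : br w (a *: x) = a *: br w x.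
Proof. by rewrite brA brZl -scalerN -brA. Qed.
Lemma br0r w : br w 0 = 0.
Proof. by rewrite brA br0l oppr0. Qed.
Lemma brNr x w : br w (- x) = - br w x.
Proof. by rewrite -scaleN1r brZr scaleN1r. Qed.
Lemma brBl x y w : br (x - y) w = br x w - br y w.
Proof. by rewrite brDl brNl. Qed.
Lemma brBr x y w : br w (x - y) = br w x - br w y.
Proof. by rewrite brDr brNr. Qed.

Lemma br_cen x y : cen (br x y).
Proof. by move=> w; apply: br2. Qed.
Lemma br_cl c y : cen c -> br c y = 0.
Proof. by move=> h; apply: h. Qed.
Lemma br_cr c y : cen c -> br y c = 0.
Proof. by move=> h; rewrite brA h oppr0. Qed.

Lemma cen0 : cen 0.
Proof. by move=> x; rewrite br0l. Qed.
Lemma cenL a x y : cen x -> cen y -> cen (a *: x + y).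
Proof. by move=> hx hy w; rewrite brL hx hy scaler0 addr0. Qed.
Lemma cenD x y : cen x -> cen y -> cen (x + y).
Proof. by move=> hx hy; rewrite -[x]scale1r; apply: cenL. Qed.
Lemma cenZ a x : cen x -> cen (a *: x).
Proof. by move=> hx; rewrite -[_ *: x]addr0; apply: cenL => //; apply: cen0. Qed.
Lemma cenN x : cen x -> cen (- x).
Proof. by move=> hx; rewrite -scaleN1r; apply: cenZ. Qed.
Lemma cenB x y : cen x -> cen y -> cen (x - y).
Proof. by move=> hx hy; apply: cenD => //; apply: cenN. Qed.
Lemma cen_sum I (r : seq I) (P : pred I) (F : I -> 'rV[R]_n) :
  (forall i, P i -> cen (F i)) -> cen (\sum_(i <- r | P i) F i).
Proof.
move=> h; elim/big_rec: _; first exact: cen0.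
by move=> i x Pi hx; apply: cenD => //; apply: h.
Qed.

Lemma vp0 : vp 0.
Proof. by move=> z _; rewrite ip0l. Qed.
Lemma vpL a x y : vp x -> vp y -> vp (a *: x + y).
Proof. by move=> hx hy z hz; rewrite ipDl ipZl hx // hy // mulr0 addr0. Qed.
Lemma vpD x y : vp x -> vp y -> vp (x + y).
Proof. by move=> hx hy; rewrite -[x]scale1r; apply: vpL. Qed.
Lemma vpZ a x : vp x -> vp (a *: x).
Proof. by move=> hx; rewrite -[_ *: x]addr0; apply: vpL => //; apply: vp0. Qed.
Lemma vpN x : vp x -> vp (- x).
Proof. by move=> hx; rewrite -scaleN1r; apply: vpZ. Qed.
Lemma vpB x y : vp x -> vp y -> vp (x - y).
Proof. by move=> hx hy; apply: vpD => //; apply: vpN. Qed.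

Lemma ip_vc v c : vp v -> cen c -> ip v c = 0.
Proof. by move=> hv hc; apply: hv. Qed.
Lemma ip_cv v c : vp v -> cen c -> ip c v = 0.
Proof. by move=> hv hc; rewrite ipC; apply: hv. Qed.

Lemma cv0 c : cen c -> vp c -> c = 0.
Proof. by move=> hc hv; apply: nd => // z' hz'; apply: hv. Qed.

Definition eps k := ip (zb k) (zb k).
Lemma eps2 k : eps k * eps k = 1.
Proof. by rewrite /eps; case: (znorm k) => ->; rewrite ?mulr1 ?mulrNN ?mulr1. Qed.

Definition rho x := \sum_(k < p) (eps k * ip x (zb k)) *: zb k.
Definition pi x := x - rho x.

Lemma rho_cen x : cen (rho x).
Proof. by apply: cen_sum => k _; apply: cenZ. Qed.

Lemma ip_sum_zb (c : 'I_p -> R) l :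
  ip (\sum_(k < p) c k *: zb k) (zb l) = c l * eps l.
Proof.
rewrite ip_suml (bigD1 l) //= big1 ?addr0; first by rewrite ipZl.
by move=> k kl; rewrite ipZl zorth ?mulr0.
Qed.

Lemma ip_rho_zb x l : ip (rho x) (zb l) = ip x (zb l).
Proof. by rewrite ip_sum_zb mulrAC eps2 mul1r. Qed.

Lemma pi_vp x : vp (pi x).
Proof.
move=> z /zspan [c ->]; rewrite ip_sumr big1 // => k _.
by rewrite ipZr /pi ipBl ip_rho_zb subrr mulr0.
Qed.

Lemma rho_vp v : vp v -> rho v = 0.
Proof. by move=> hv; rewrite /rho big1 // => k _; rewrite hv // mulr0 scale0r. Qed.
Lemma pi_vp_id v : vp v -> pi v = v.
Proof. by move=> hv; rewrite /pi rho_vp // subr0. Qed.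
Lemma pi_cen c : cen c -> pi c = 0.
Proof. by move=> hc; apply: cv0 (pi_vp c); apply: cenB => //; apply: rho_cen. Qed.
Lemma rho_cen_id c : cen c -> rho c = c.
Proof. by move=> hc; have := pi_cen hc; rewrite /pi => /eqP; rewrite subr_eq0 => /eqP. Qed.
Lemma pi_rho x : x = pi x + rho x.
Proof. by rewrite /pi subrK. Qed.

Lemma rhoL a x y : rho (a *: x + y) = a *: rho x + rho y.
Proof.
rewrite /rho scaler_sumr -big_split; apply: eq_bigr => k _ /=.
by rewrite ipDl ipZl scalerA -scalerDl mulrDr mulrCA.
Qed.
Lemma piL a x y : pi (a *: x + y) = a *: pi x + pi y.
Proof. by rewrite /pi rhoL scalerBr opprD addrACA. Qed.
Lemma rho0 : rho 0 = 0.
Proof. exact: rho_cen_id cen0. Qed.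
Lemma pi0 : pi 0 = 0.
Proof. exact: pi_cen cen0. Qed.

Lemma ip_v_pi v w : vp v -> ip v w = ip v (pi w).
Proof.
by move=> hv; rewrite {1}(pi_rho w) ipDr (ip_vc hv (rho_cen w)) addr0.
Qed.
Lemma ip_c_rho c w : cen c -> ip c w = ip c (rho w).
Proof.
by move=> hc; rewrite {1}(pi_rho w) ipDr (ip_cv (pi_vp w) hc) add0r.
Qed.

Lemma br_pi x y : br x y = br (pi x) (pi y).
Proof.
rewrite {1}(pi_rho x) {1}(pi_rho y) brDl brDr brDr.
rewrite (br_cr _ (rho_cen _)) (br_cl _ (rho_cen _)) (br_cl _ (rho_cen _)).
by rewrite !addr0.
Qed.

Lemma j_vp z x : cen z -> vp x -> vp (j z x).
Proof. by move=> hz hx; case: (jm hz hx). Qed.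
Lemma j_def z x y : cen z -> vp x -> vp y -> ip (br x y) z = ip y (j z x).
Proof. by move=> hz hx hy; case: (jm hz hx) => _ ->. Qed.
Lemma j_ip z x y : cen z -> vp x -> vp y -> ip (j z x) y = ip (br x y) z.
Proof. by move=> hz hx hy; rewrite j_def // ipC. Qed.
Lemma j_skew z x y : cen z -> vp x -> vp y -> ip (j z x) y = - ip x (j z y).
Proof.
move=> hz hx hy; rewrite j_ip // -j_def // brA.
by rewrite ipNl.
Qed.

Lemma v_nondeg u : vp u -> (forall y, vp y -> ip u y = 0) -> u = 0.
Proof. by move=> hu h; apply: ip_nondeg => w; rewrite ip_v_pi // (h _ (pi_vp w)). Qed.

Lemma j_linx z a x y : cen z -> vp x -> vp y -> j z (a *: x + y) = a *: j z x + j z y.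
Proof.
move=> hz hx hy; apply/eqP; rewrite -subr_eq0; apply/eqP.
have hxy : vp (a *: x + y) by apply: vpL.
apply: v_nondeg.
  by apply: vpB; [apply: j_vp | apply: vpL; apply: j_vp].
move=> t ht; rewrite ipBl ipDl ipZl !j_ip // brL ipDl ipZl.
by rewrite subrr.
Qed.
Lemma j_linz z z' a x : cen z -> cen z' -> vp x -> j (a *: z + z') x = a *: j z x + j z' x.
Proof.
move=> hz hz' hx; apply/eqP; rewrite -subr_eq0; apply/eqP.
have hzz : cen (a *: z + z') by apply: cenL.
apply: v_nondeg.
  by apply: vpB; [apply: j_vp | apply: vpL; apply: j_vp].
move=> t ht; rewrite ipBl ipDl ipZl !j_ip // ipDr ipZr.
by rewrite subrr.
Qed.
Lemma j0x x : vp x -> j 0 x = 0.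
Proof.
move=> hx; move: (j_linz (-1) cen0 cen0 hx).
by rewrite scaler0 addr0 scaleN1r addNr.
Qed.
Lemma jz0 z : cen z -> j z 0 = 0.
Proof.
move=> hz; move: (j_linx (-1) hz vp0 vp0).
by rewrite scaler0 addr0 scaleN1r addNr.
Qed.
Lemma jZx z a x : cen z -> vp x -> j z (a *: x) = a *: j z x.
Proof. by move=> hz hx; move: (j_linx a hz hx vp0); rewrite !addr0 jz0 // addr0. Qed.
Lemma jZz z a x : cen z -> vp x -> j (a *: z) x = a *: j z x.
Proof. by move=> hz hx; move: (j_linz a hz cen0 hx); rewrite !addr0 j0x // addr0. Qed.
Lemma jDz z z' x : cen z -> cen z' -> vp x -> j (z + z') x = j z x + j z' x.
Proof. by move=> hz hz' hx; move: (j_linz 1 hz hz' hx); rewrite !scale1r. Qed.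
Lemma jDx z x y : cen z -> vp x -> vp y -> j z (x + y) = j z x + j z y.
Proof. by move=> hz hx hy; move: (j_linx 1 hz hx hy); rewrite !scale1r. Qed.

Lemma jj z x : cen z -> vp x -> j z (j z x) = - phi z *: x.
Proof. by move=> hz hx; apply: hm. Qed.

Lemma jj_ip z x y : cen z -> vp x -> vp y -> ip (j z x) (j z y) = phi z * ip x y.
Proof.
move=> hz hx hy; rewrite j_skew //; last exact: j_vp.
by rewrite jj // ipZr mulNr opprK.
Qed.

Lemma j_polar z z' x : cen z -> cen z' -> vp x ->
  j z (j z' x) + j z' (j z x) = - (2 * polar phi z z') *: x.
Proof.
move=> hz hz' hx.
have hzz : cen (z + z') by apply: cenD.
have h := jj hzz hx.
have hs : vp (j z x) by apply: j_vp.
have hs' : vp (j z' x) by apply: j_vp.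
rewrite (jDz hz hz' hx) (jDz hz hz' (vpD hs hs')) (jDx hz hs hs') (jDx hz' hs hs') !jj // in h.
rewrite /polar mulrC divfK ?pnatr_eq0 //.
apply: (addrI (- phi z *: x)); apply: (addIr (- phi z' *: x)).
rewrite (addrA (- phi z *: x)) -(addrA _ (j z' (j z x))) h -!scalerDl; congr (_ *: _).
by ring.
Qed.

Definition linF (f : 'rV[R]_n -> R) := forall a x y, f (a *: x + y) = a * f x + f y.
Definition linV (f : 'rV[R]_n -> 'rV[R]_n) := forall a x y, f (a *: x + y) = a *: f x + f y.

Lemma linF0 f : linF f -> f 0 = 0.
Proof. by move=> h; move: (h (-1) 0 0); rewrite scaler0 addr0 mulN1r addNr. Qed.
Lemma linV0 f : linV f -> f 0 = 0.
Proof. by move=> h; move: (h (-1) 0 0); rewrite scaler0 addr0 scaleN1r addNr. Qed.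

Lemma linF_expand f : linF f -> forall w, f w = \sum_(i < n) w 0 i * f (ebase i).
Proof.
move=> h w; rewrite {1}(row_sum_delta w).
apply: (big_rec2 (fun a b => f a = b)); first exact: linF0.
by move=> i y1 y2 _ <-; rewrite h.
Qed.

Definition Kz x y w := (ip (br x y) w - ip (br y w) x + ip (br w x) y) / 2.

Lemma Kz_lin x y : linF (Kz x y).
Proof.
move=> a u v; rewrite /Kz ipDr ipZr brDr brZr ipDl ipZl brDl brZl ipDl ipZl.
by ring.
Qed.

Lemma lc_ip x y w : ip (levi_civita br G x y) w = Kz x y w.
Proof.
rewrite (linF_expand (Kz_lin x y) w) /levi_civita {1}/ipform (mulmxKV Gu) mxE.
by apply: eq_bigr => i _; rewrite !mxE mulrC.
Qed.

Local Notation lc := (levi_civita br G).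

Lemma T2 x y w : ip (br y w) x = ip (j (rho x) (pi y)) w.
Proof.
have hj : vp (j (rho x) (pi y)) by apply: j_vp; [apply: rho_cen | apply: pi_vp].
rewrite br_pi (ip_c_rho x (br_cen (pi y) (pi w))).
rewrite (j_def (rho_cen x) (pi_vp y) (pi_vp w)).
by rewrite [RHS](ip_v_pi _ hj) ipC.
Qed.

Lemma T3 x y w : ip (br w x) y = - ip (j (rho y) (pi x)) w.
Proof.
have hj : vp (j (rho y) (pi x)) by apply: j_vp; [apply: rho_cen | apply: pi_vp].
rewrite br_pi (ip_c_rho y (br_cen (pi w) (pi x))).
rewrite (j_def (rho_cen y) (pi_vp w) (pi_vp x)).
rewrite [in RHS](ip_v_pi _ hj) (j_skew (rho_cen y) (pi_vp x) (pi_vp w)).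
by rewrite opprK.
Qed.

Lemma lcE x y : lc x y = (1/2) *: (br x y - j (rho x) (pi y) - j (rho y) (pi x)).
Proof.
apply/eqP; rewrite -subr_eq0; apply/eqP; apply: ip_nondeg => w.
rewrite ipBl lc_ip /Kz ipZl !ipBl (T2 x y w) (T3 x y w).
by rewrite mulrC mul1r subrr.
Qed.

Lemma lc_wv w y : vp y -> lc w y = (1/2) *: br w y - (1/2) *: j (rho w) y.
Proof.
move=> hy; rewrite lcE (rho_vp hy) (pi_vp_id hy) (j0x (pi_vp w)) subr0.
by rewrite scalerBr.
Qed.
Lemma lc_wc w c : cen c -> lc w c = - ((1/2) *: j c (pi w)).
Proof.
move=> hc; rewrite lcE (br_cr w hc) (pi_cen hc) (jz0 (rho_cen w)) (rho_cen_id hc).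
by rewrite subr0 sub0r scalerN.
Qed.
Lemma lc_vw x w : vp x -> lc x w = (1/2) *: br x w - (1/2) *: j (rho w) x.
Proof.
move=> hx; rewrite lcE (rho_vp hx) (pi_vp_id hx) (j0x (pi_vp w)) subr0.
by rewrite scalerBr.
Qed.
Lemma lc_cw c w : cen c -> lc c w = - ((1/2) *: j c (pi w)).
Proof.
move=> hc; rewrite lcE (br_cl w hc) (pi_cen hc) (jz0 (rho_cen w)) (rho_cen_id hc).
by rewrite subr0 sub0r scalerN.
Qed.

Definition tr (f : 'rV[R]_n -> 'rV[R]_n) := \sum_(i < n) (f (ebase i)) 0 i.

Lemma tr_ext f g : (forall w, f w = g w) -> tr f = tr g.
Proof. by move=> h; apply: eq_bigr => i _; rewrite h. Qed.
Lemma trD f g : tr (fun w => f w + g w) = tr f + tr g.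
Proof. by rewrite /tr -big_split; apply: eq_bigr => i _; rewrite mxE. Qed.
Lemma trZ a f : tr (fun w => a *: f w) = a * tr f.
Proof. by rewrite /tr mulr_sumr; apply: eq_bigr => i _; rewrite mxE. Qed.
Lemma trN f : tr (fun w => - f w) = - tr f.
Proof. by rewrite /tr -sumrN; apply: eq_bigr => i _; rewrite mxE. Qed.
Lemma trB f g : tr (fun w => f w - g w) = tr f - tr g.
Proof. by rewrite trD trN. Qed.
Lemma tr_sum (F : 'I_p -> 'rV[R]_n -> 'rV[R]_n) :
  tr (fun w => \sum_(k < p) F k w) = \sum_(k < p) tr (F k).
Proof.
rewrite /tr exchange_big; apply: eq_bigr => i _ /=.
by rewrite summxE.
Qed.
Lemma tr_rank g b : linF g -> tr (fun w => g w *: b) = g b.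
Proof.
move=> hg; rewrite (linF_expand hg b) /tr; apply: eq_bigr => i _.
by rewrite mxE mulrC.
Qed.

Definition linC (h : 'rV[R]_n -> 'rV[R]_n) :=
  forall a c c', cen c -> cen c' -> h (a *: c + c') = a *: h c + h c'.

Lemma h_sum h (a : 'I_p -> R) : linC h ->
  h (\sum_(k < p) a k *: zb k) = \sum_(k < p) a k *: h (zb k).
Proof.
move=> hh.
suff : cen (\sum_(k < p) a k *: zb k) /\
       h (\sum_(k < p) a k *: zb k) = \sum_(k < p) a k *: h (zb k) by case.
apply: (big_rec2 (fun s t => cen s /\ h s = t)).
  split; first exact: cen0.
  by move: (hh (-1) 0 0 cen0 cen0); rewrite scaler0 addr0 scaleN1r addNr.
move=> k s t _ [hs <-]; split; first by apply: cenL.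
by rewrite hh.
Qed.

Lemma tr_master f h : linV f -> (forall w, cen (f w)) -> linC h ->
  tr (fun w => h (f w)) = \sum_(k < p) eps k * ip (f (h (zb k))) (zb k).
Proof.
move=> hf cf hh.
rewrite (tr_ext (g := fun w => \sum_(k < p) (fun k w => (eps k * ip (f w) (zb k)) *: h (zb k)) k w)).
  rewrite tr_sum; apply: eq_bigr => k _ /=.
  rewrite (tr_rank (g := fun w => eps k * ip (f w) (zb k))) //.
  by move=> a x y; rewrite hf ipDl ipZl; ring.
by move=> w /=; rewrite -{1}(rho_cen_id (cf w)) /rho h_sum.
Qed.

Definition Mat (f : 'rV[R]_n -> 'rV[R]_n) : 'M[R]_n := \matrix_(i, k) (f (ebase i)) 0 k.

Lemma linV_mat f : linV f -> forall w, f w = w *m Mat f.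
Proof.
move=> hf w; apply/rowP => k.
have hg : linF (fun w => (f w) 0 k) by move=> a x y /=; rewrite hf !mxE.
rewrite (linF_expand hg w) !mxE; apply: eq_bigr => i _.
by rewrite mxE.
Qed.

Lemma tr_mx (M : 'M[R]_n) : tr (fun w => w *m M) = \tr M.
Proof. by apply: eq_bigr => i _; rewrite -rowE mxE. Qed.

Lemma tr_comm f g : linV f -> linV g -> tr (fun w => f (g w)) = tr (fun w => g (f w)).
Proof.
move=> hf hg.
rewrite (tr_ext (g := fun w => w *m (Mat g *m Mat f))); last first.
  by move=> w; rewrite (linV_mat hf) (linV_mat hg) mulmxA.
rewrite [RHS](tr_ext (g := fun w => w *m (Mat f *m Mat g))); last first.
  by move=> w; rewrite (linV_mat hf) (linV_mat hg) mulmxA.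
by rewrite !tr_mx mxtrace_mulC.
Qed.

Lemma mxtraceN' (A : 'M[R]_n) : \tr (- A) = - \tr A.
Proof. exact: raddfN. Qed.

Lemma tr_skew f : linV f -> (forall w u, ip (f w) u = - ip w (f u)) -> tr f = 0.
Proof.
move=> hf hs.
set M := Mat f.
have hS : (M *m G)^T = - (M *m G).
  apply/matrixP => i k; rewrite mxE [RHS]mxE.
  have e1 : forall a b, (M *m G) a b = ip (f (ebase a)) (ebase b).
    by move=> a b; rewrite ip_ebase (linV_mat hf) -mulmxA /ebase -rowE [RHS]mxE.
  by rewrite (e1 k i) (e1 i k) hs ipC.
have hM : M = (M *m G) *m invmx G by rewrite mulmxK.
have : \tr M = - \tr M.
  rewrite {1}hM -mxtrace_tr trmx_mul hS trmx_inv GT mulmxN mxtraceN'.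
  by rewrite mxtrace_mulC -hM.
rewrite /tr => h.
have -> : \sum_(i < n) (f (ebase i)) 0 i = \tr M by apply: eq_bigr => i _; rewrite mxE.
lra.
Qed.

Lemma linC_id : linC id.
Proof. by []. Qed.

Lemma tr_master_id f : linV f -> (forall w, cen (f w)) ->
  tr f = \sum_(k < p) eps k * ip (f (zb k)) (zb k).
Proof. by move=> hf cf; apply: (@tr_master f id hf cf linC_id). Qed.

Lemma tr_id : tr (fun w => w) = n%:R.
Proof.
rewrite /tr (eq_bigr (fun _ => 1)) ?sumr_const ?card_ord //.
by move=> i _; rewrite /ebase mxE !eqxx.
Qed.

Lemma rho_linV : linV rho.
Proof. by move=> a x y; rewrite rhoL. Qed.
Lemma pi_linV : linV pi.
Proof. by move=> a x y; rewrite piL. Qed.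

Lemma tr_rho : tr rho = p%:R.
Proof.
rewrite (@tr_master rho id rho_linV rho_cen linC_id).
rewrite (eq_bigr (fun _ => 1)) ?sumr_const ?card_ord //.
by move=> k _ /=; rewrite rho_cen_id // eps2.
Qed.

Lemma tr_pi : tr pi = n%:R - p%:R.
Proof. by rewrite /pi (trB (fun w => w) rho) tr_id tr_rho. Qed.

Lemma caseA e z : vp e -> cen z -> ricci br G e z = 0.
Proof.
move=> he hz.
have -> : ricci br G e z = tr (fun w => curv br G w e z) by [].
set u := - ((1/2) *: j z e).
have hu : vp u by rewrite /u; apply: vpN; apply: vpZ; apply: j_vp.
rewrite (tr_ext (g := fun w => (1/2) *: br w u - (1/2) *: j (rho w) u
     - (1/2) *: br e (- ((1/2) *: j z (pi w))))); last first.
  move=> w; rewrite /curv (lc_wc e hz) (pi_vp_id he) -/u (lc_wv w hu).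
  rewrite (lc_wc w hz) (lc_vw _ he) (rho_vp (v := - ((1/2) *: j z (pi w)))); last first.
    by apply: vpN; apply: vpZ; apply: j_vp => //; apply: pi_vp.
  rewrite (j0x he) scaler0 subr0 (lc_wc _ hz) (pi_cen (br_cen w e)) (jz0 hz).
  by rewrite scaler0 oppr0 subr0.
rewrite !trB !trZ.
have l1 : linV (fun w => br w u) by move=> a x y; rewrite brDl brZl.
have l2 : linC (fun c => j c u) by move=> a c c' hc hc'; rewrite j_linz.
have l3 : linV (fun w => br e (- ((1/2) *: j z (pi w)))).
  move=> a x y; rewrite piL (j_linx a hz (pi_vp x) (pi_vp y)) scalerDr opprD.
  by rewrite brDr -!scalerN !brZr !scalerA mulrC.
rewrite (tr_master_id l1 (fun w => br_cen w u)).
rewrite (tr_master rho_linV rho_cen l2).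
rewrite (tr_master_id l3 (fun w => br_cen _ _)).
rewrite !big1 ?mulr0 ?subr0 //.
- move=> k _ /=; rewrite (pi_cen (zcen k)) (jz0 hz) scaler0 oppr0 br0r ip0l.
  by rewrite mulr0.
- move=> k _ /=; rewrite rho_vp ?ip0l ?mulr0 //.
  by apply: j_vp.
- by move=> k _ /=; rewrite (br_cl _ (zcen k)) ip0l mulr0.
Qed.

Lemma rhoZ a x : rho (a *: x) = a *: rho x.
Proof. by move: (rhoL a x 0); rewrite !addr0 rho0 addr0. Qed.
Lemma rhoD x y : rho (x + y) = rho x + rho y.
Proof. by move: (rhoL 1 x y); rewrite !scale1r. Qed.
Lemma rhoN x : rho (- x) = - rho x.
Proof. by rewrite -scaleN1r rhoZ scaleN1r. Qed.

Definition xi := \sum_(k < p) ip (zb k) (zb k) * phi (zb k).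

Lemma sum_xi (F : 'I_p -> R) X :
  (forall k, F k = phi (zb k) * X) -> \sum_(k < p) eps k * F k = xi * X.
Proof.
move=> h; rewrite /xi mulr_suml; apply: eq_bigr => k _.
by rewrite h /eps mulrA.
Qed.

Lemma caseB e e' : vp e -> vp e' -> ricci br G e e' = - (xi / 2) * ip e e'.
Proof.
move=> he he'.
have -> : ricci br G e e' = tr (fun w => curv br G w e e') by [].
set c := (1/2) *: br e e'.
have hc : cen c by apply: cenZ; apply: br_cen.
rewrite (tr_ext (g := fun w => - ((1/2) *: j c (pi w)) + (1/4) *: br e (j (rho w) e')
    + (1/4) *: j (br w e') e + (1/2) *: j (br w e) e')); last first.
  move=> w; rewrite /curv (lc_wv e he') (rho_vp he) (j0x he') scaler0 subr0 -/c.
  rewrite (lc_wc w hc) (lc_wv w he') (lc_vw _ he).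
  set y := (1/2) *: br w e' - (1/2) *: j (rho w) e'.
  have hj : vp (j (rho w) e') by apply: j_vp => //; apply: rho_cen.
  have ry : rho y = (1/2) *: br w e'.
    by rewrite /y rhoD rhoN !rhoZ (rho_vp hj) (rho_cen_id (br_cen w e')) scaler0 oppr0 addr0.
  have by_ : br e y = - ((1/2) *: br e (j (rho w) e')).
    by rewrite /y brDr brNr !brZr (br_cr _ (br_cen w e')) scaler0 add0r.
  rewrite ry by_ (jZz _ (br_cen w e') he) (lc_cw _ (br_cen w e)) (pi_vp_id he').
  by apply/rowP => i; rewrite !mxE; field.
rewrite !trD trN !trZ.
have l0 : linV (fun w => j c (pi w)).
  by move=> a x y; rewrite piL (j_linx a hc (pi_vp x) (pi_vp y)).
have s0 : tr (fun w => j c (pi w)) = 0.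
  apply: tr_skew => // w u.
  have h1 : vp (j c (pi w)) by apply: j_vp => //; apply: pi_vp.
  have h2 : vp (j c (pi u)) by apply: j_vp => //; apply: pi_vp.
  rewrite (ip_v_pi _ h1) (j_skew hc (pi_vp w) (pi_vp u)).
  by rewrite [in RHS]ipC [in RHS](ip_v_pi _ h2) ipC.
have l1 : linC (fun c => br e (j c e')).
  by move=> a z z' hz hz'; rewrite (j_linz a hz hz' he') brDr brZr.
have l2 : linV (fun w => br w e') by move=> a x y; rewrite brDl brZl.
have l3 : linV (fun w => br w e) by move=> a x y; rewrite brDl brZl.
have l4 : linC (fun c => j c e) by move=> a z z' hz hz'; rewrite j_linz.
have l5 : linC (fun c => j c e') by move=> a z z' hz hz'; rewrite j_linz.
rewrite s0 (tr_master rho_linV rho_cen l1).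
rewrite (tr_master l2 (fun w => br_cen w e') l4).
rewrite (tr_master l3 (fun w => br_cen w e) l5).
rewrite (@sum_xi _ (ip e e')); last first.
  move=> k; rewrite (rho_cen_id (br_cen _ _)).
  rewrite (j_def (zcen k) he (j_vp (zcen k) he')) jj_ip ?zcen //.
  by rewrite ipC.
rewrite (@sum_xi _ (- ip e e')); last first.
  move=> k; rewrite (j_def (zcen k) (j_vp (zcen k) he) he') jj ?zcen // ipZr.
  by rewrite ipC mulrN mulNr.
rewrite (@sum_xi _ (- ip e e')); last first.
  move=> k; rewrite (j_def (zcen k) (j_vp (zcen k) he') he) jj ?zcen // ipZr.
  by rewrite mulrN mulNr.
by ring.
Qed.

Lemma caseC z z' : cen z -> cen z' ->
  ricci br G z z' = ((n%:R - p%:R) / 4) * polar phi z z'.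
Proof.
move=> hz hz'.
have -> : ricci br G z z' = tr (fun w => curv br G w z z') by [].
rewrite (tr_ext (g := fun w => (- (1/4)) *: j z (j z' (pi w)))); last first.
  move=> w; rewrite /curv (lc_wc z hz') (pi_cen hz) (jz0 hz') scaler0 oppr0.
  rewrite (lc_wc w cen0) (j0x (pi_vp w)) scaler0 oppr0.
  rewrite (lc_wc w hz') (lc_cw _ hz) (br_cr w hz) (lc_wc 0 hz') pi0 (jz0 hz').
  have hj : vp (j z' (pi w)) by apply: j_vp => //; apply: pi_vp.
  rewrite pi_vp_id; last by apply: vpN; apply: vpZ.
  rewrite -[- ((1/2) *: j z' (pi w))]scaleNr (jZx _ hz hj).
  by apply/rowP => i; rewrite !mxE; field.
rewrite trZ.
have lz : forall c, cen c -> linV (fun w => j c (pi w)).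
  by move=> c hc a x y; rewrite piL (j_linx a hc (pi_vp x) (pi_vp y)).
have e1 : tr (fun w => j z (j z' (pi w))) = tr (fun w => j z (pi (j z' (pi w)))).
  by apply: tr_ext => w; rewrite (pi_vp_id (j_vp hz' (pi_vp w))).
have e2 : tr (fun w => j z' (j z (pi w))) = tr (fun w => j z' (pi (j z (pi w)))).
  by apply: tr_ext => w; rewrite (pi_vp_id (j_vp hz (pi_vp w))).
have e3 : tr (fun w => j z (j z' (pi w))) = tr (fun w => j z' (j z (pi w))).
  by rewrite e1 e2 (tr_comm (lz _ hz) (lz _ hz')).
have e4 : tr (fun w => j z (j z' (pi w))) + tr (fun w => j z' (j z (pi w)))
          = - (2 * polar phi z z') * (n%:R - p%:R).
  rewrite -trD (tr_ext (g := fun w => (- (2 * polar phi z z')) *: pi w)).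
    by rewrite trZ tr_pi.
  by move=> w; rewrite j_polar //; apply: pi_vp.
rewrite e3 in e4 *.
have -> : tr (fun w => j z' (j z (pi w))) =
  (tr (fun w => j z' (j z (pi w))) + tr (fun w => j z' (j z (pi w)))) / 2 by field.
by rewrite e4; field.
Qed.

Lemma eps_neq0 k : eps k != 0.
Proof. by apply/eqP => h; move: (eps2 k); rewrite h mul0r => /eqP; rewrite eq_sym oner_eq0. Qed.

Lemma dim_eq m (vb : 'I_m -> 'rV[R]_n) : is_basis_of vp vb -> n = (p + m)%N.
Proof.
case=> vbv [vind vspan].
set Z : 'M[R]_(p, n) := \matrix_(k < p) zb k.
set V : 'M[R]_(m, n) := \matrix_(a < m) vb a.
set B := col_mx Z V.
have mulZ (c : 'rV[R]_p) : c *m Z = \sum_(k < p) c 0 k *: zb k.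
  by rewrite mulmx_sum_row; apply: eq_bigr => k _; rewrite rowK.
have mulV (c : 'rV[R]_m) : c *m V = \sum_(a < m) c 0 a *: vb a.
  by rewrite mulmx_sum_row; apply: eq_bigr => k _; rewrite rowK.
have free : row_free B.
  rewrite -kermx_eq0; apply/eqP/row_matrixP => i; rewrite row0.
  have : row i (kermx B) *m B = 0 by apply/sub_kermxP; exact: row_sub.
  move: (row i (kermx B)) => u.
  rewrite -[u]hsubmxK mul_row_col mulZ mulV.
  set l := lsubmx u; set r := rsubmx u => h.
  have hc : cen (\sum_(k < p) l 0 k *: zb k).
    by apply: cen_sum => k _; apply: cenZ.
  have hv : vp (\sum_(a < m) r 0 a *: vb a).
    elim/big_rec: _ => [|a x _ hx]; first exact: vp0.
    by apply: vpL.
  have hc0 : \sum_(k < p) l 0 k *: zb k = 0.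
    apply: cv0 => //; have -> : \sum_(k < p) l 0 k *: zb k = - \sum_(a < m) r 0 a *: vb a.
      by apply/eqP; rewrite -addr_eq0 h.
    exact: vpN.
  have hv0 : \sum_(a < m) r 0 a *: vb a = 0 by move: h; rewrite hc0 add0r.
  have -> : l = 0.
    apply/rowP => k; rewrite [RHS]mxE.
    have := ip_sum_zb (fun k => l 0 k) k; rewrite hc0 ip0l => /esym /eqP.
    by rewrite mulf_eq0 (negbTE (eps_neq0 k)) orbF => /eqP.
  have -> : r = 0.
    by apply/rowP => a; rewrite [RHS]mxE; apply: (vind (fun a => r 0 a) hv0).
  by rewrite row_mx0.
have full : row_full B.
  rewrite -sub1mx; apply/row_subP => i.
  set x := row i 1%:M.
  have [d hd] := vspan _ (pi_vp x).
  set C := \row_(k < p) (eps k * ip x (zb k)).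
  set D := \row_(a < m) d a.
  have -> : x = row_mx C D *m B.
    rewrite mul_row_col mulZ mulV {1}(pi_rho x) hd addrC; congr (_ + _).
      by apply: eq_bigr => k _; rewrite mxE.
    by apply: eq_bigr => a _; rewrite mxE.
  exact: submxMl.
have h1 := rank_leq_row B.
have h2 := rank_leq_col B.
move: free full; rewrite -row_leq_rank -col_leq_rank => h3 h4.
apply/eqP; rewrite eqn_leq; apply/andP; split.
  exact: leq_trans h4 h1.
exact: leq_trans h3 h2.
Qed.

Lemma main_sec m (vb : 'I_m -> 'rV[R]_n) : is_basis_of vp vb ->
  forall e e' z z', vp e -> vp e' -> cen z -> cen z' ->
    [/\ ricci br G e z = 0,
        ricci br G e e' = - (xi / 2) * ip e e'
      & ricci br G z z' = (m%:R / 4) * polar phi z z'].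
Proof.
move=> hvb e e' z z' he he' hz hz'; split.
- exact: caseA.
- exact: caseB.
- rewrite caseC //; have -> : (n%:R : R) = p%:R + m%:R by rewrite (dim_eq hvb) natrD.
  by rewrite addrAC subrr add0r.
Qed.
End Main.

Unset Implicit Arguments.
Set Strict Implicit.

Theorem theorem3p4 (R : realType) (n : nat)
    (br : 'rV[R]_n -> 'rV[R]_n -> 'rV[R]_n) (G : 'M[R]_n)
    (j : 'rV[R]_n -> 'rV[R]_n -> 'rV[R]_n) (phi : 'rV[R]_n -> R)
    (p m : nat) (zb : 'I_p -> 'rV[R]_n) (vb : 'I_m -> 'rV[R]_n) :
  is_lie_bracket br -> two_step br ->
  inner_product G -> nondeg_on (center br) G ->
  quadratic_form_on (center br) phi ->
  is_j_map br G j -> modified_H_type br G j phi ->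
  is_basis_of (center br) zb -> pseudo_orthonormal G zb ->
  is_basis_of (vpart br G) vb ->
  let xi := \sum_(k < p) ipform G (zb k) (zb k) * phi (zb k) in
  forall e e' z z', vpart br G e -> vpart br G e' -> center br z -> center br z' ->
    [/\ ricci br G e z = 0,
        ricci br G e e' = - (xi / 2) * ipform G e e'
      & ricci br G z z' = (m%:R / 4) * polar phi z z'].
Proof.
move=> [brL [brA _]] [br2 _] [GT Gu] nd _ jm hm [zcen [_ zspan]] [zorth znorm] vbb xi.
exact: (main_sec brL brA br2 GT Gu nd zcen zspan zorth znorm jm hm vbb).
Qed.
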